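(* In each of $\mathsf{G}(\mathbf{K}_D)$, $\mathsf{G}(\mathbf{KD}_D)$ and $\mathsf{G}(\mathbf{KT}_D)$, all logical rules other than the modal rules ($(D_K)$ in $\mathsf{G}(\mathbf{K}_D)$; $(D_K)$ and $(D_D)$ in $\mathsf{G}(\mathbf{KD}_D)$; $(D_K)$ and $(D_T)$ in $\mathsf{G}(\mathbf{KT}_D)$), i.e. the rules $(R\wedge),(L\wedge),(R\vee),(L\vee),(R\rightarrow),(L\rightarrow),(R\neg),(L\neg)$, are height-preserving invertible: whenever the conclusion of an instance of such a rule has a derivation of height $n$, each premise of that instance has a derivation of height at most $n$.
   Context: Language: fix a finite nonempty set $\mathsf{Agt}$ of agents and a countable set $\mathsf{Prop}$ of propositional variables; $\mathsf{Grp}$ is the set of nonempty subsets of $\mathsf{Agt}$. Formulas: $\alpha::=p\mid\bot\mid\alpha\wedge\alpha\mid\alpha\vee\alpha\mid\alpha\rightarrow\alpha\mid\neg\alpha\mid D_G\alpha$ ($p\in\mathsf{Prop}$, $G\in\mathsf{Grp}$). Outmost-boxed formula: one of the form $D_G\gamma$. Sequent calculi (sequents $\Gamma\Rightarrow\Delta$ are pairs of finite multisets; a derivation is a finite tree built from initial sequents by rules; its height is the maximum length of a branch from the end sequent to an initial sequent): $\mathsf{G}(\mathbf{K}_D)$ has initial sequents $\Gamma,p\Rightarrow p,\Delta$ and $\bot,\Gamma\Rightarrow\Delta$; rules $(R\wedge)$ from $\Gamma\Rightarrow\Delta,\alpha_1$ and $\Gamma\Rightarrow\Delta,\alpha_2$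 infer $\Gamma\Rightarrow\Delta,\alpha_1\wedge\alpha_2$; $(L\wedge)$ from $\alpha_1,\alpha_2,\Gamma\Rightarrow\Delta$ infer $\alpha_1\wedge\alpha_2,\Gamma\Rightarrow\Delta$; $(R\vee)$ from $\Gamma\Rightarrow\Delta,\alpha_1,\alpha_2$ infer $\Gamma\Rightarrow\Delta,\alpha_1\vee\alpha_2$; $(L\vee)$ from $\alpha_1,\Gamma\Rightarrow\Delta$ and $\alpha_2,\Gamma\Rightarrow\Delta$ infer $\alpha_1\vee\alpha_2,\Gamma\Rightarrow\Delta$; $(R\rightarrow)$ from $\alpha_1,\Gamma\Rightarrow\Delta,\alpha_2$ infer $\Gamma\Rightarrow\Delta,\alpha_1\rightarrow\alpha_2$; $(L\rightarrow)$ from $\Gamma\Rightarrow\Delta,\alpha_1$ and $\alpha_2,\Gamma\Rightarrow\Delta$ infer $\alpha_1\rightarrow\alpha_2,\Gamma\Rightarrow\Delta$; $(R\neg)$ from $\alpha,\Gamma\Rightarrow\Delta$ infer $\Gamma\Rightarrow\Delta,\neg\alpha$; $(L\neg)$ from $\Gamma\Rightarrow\Delta,\alpha$ infer $\neg\alpha,\Gamma\Rightarrow\Delta$; $(D_K)$: from $\alpha_1,\dots,\alpha_n\Rightarrow\beta$ ($n\ge0$) infer $\Sigma,D_{G_1}\alpha_1,\dots,D_{G_n}\alpha_n\Rightarrow D_G\beta,\Omega$ where all $G_i\subseteq G$, $\Sigma$ consists only of propositional variables, $\bot$, and $D_H\gamma$ with $H\not\subseteq G$, and $\Omega$ only of propositional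 variables, $\bot$, outmost-boxed formulas. $\mathsf{G}(\mathbf{KD}_D)$ adds $(D_D)$: from $\Gamma\Rightarrow$ with $\Gamma\neq\emptyset$ infer $\Sigma,D_{\{a\}}\Gamma\Rightarrow\Omega$, $\Sigma$ only propositional variables, $\bot$, $D_H\gamma$ with $H\neq\{a\}$; $\Omega$ only propositional variables, $\bot$, outmost-boxed formulas. $\mathsf{G}(\mathbf{KT}_D)$ adds to $\mathsf{G}(\mathbf{K}_D)$ $(D_T)$: from $D_G\alpha,\alpha,\Gamma\Rightarrow\Delta$ infer $D_G\alpha,\Gamma\Rightarrow\Delta$. *)

(* Defs.v *)
From Stdlib Require Import List Permutation.
From mathcomp Require Import all_boot.

Set Implicit Arguments.
Unset Strict Implicit.
Unset Printing Implicit Defensive.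

Section Syntax.
Variable A : finType.

Definition grp := {G : {set A} | G != set0}.

(* Prop is countable: propositional variables are indexed by nat *)
Inductive form : Type :=
| Var of nat
| Bot
| And of form & form
| Or of form & form
| Imp of form & form
| Neg of form
| Box of grp & form.

Lemma set1_neq0 (a : A) : [set a] != set0.
Proof. by apply/set0Pn; exists a; rewrite in_set1. Qed.

Definition sgrp (a : A) : grp := exist _ [set a] (set1_neq0 a).

Definition omega_ok (f : form) : Prop :=
  match f with Var _ | Bot | Box _ _ => True | _ => False end.

Definition sigmaK_ok (G : {set A}) (f : form) : Prop :=
  match f with
  | Var _ | Bot => True
  | Box H _ => ~~ (val H \subset G)
  | _ => False
  end.

Definition sigmaD_ok (a : A) (f : form) : Prop :=
  match f with
  | Var _ | Bot => True
  | Box H _ => val H != [set a]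
  | _ => False
  end.
End Syntax.

Arguments Var {A}.
Arguments Bot {A}.

Inductive calculus := GK | GKD | GKT.

(* der L n Gamma Delta : the sequent Gamma => Delta (finite multisets, represented
   as lists up to permutation) has a derivation in calculus L of height at most n. *)
Inductive der (A : finType) (L : calculus) : nat -> list (form A) -> list (form A) -> Prop :=
| d_init (n : nat) (p : nat) (G0 D0 G D : list (form A)) :
    Permutation G (Var p :: G0) -> Permutation D (Var p :: D0) -> der L n G D
| d_bot (n : nat) (G0 G D : list (form A)) :
    Permutation G (Bot :: G0) -> der L n G D
| d_Rand n a1 a2 G D0 D :
    der L n G (a1 :: D0) -> der L n G (a2 :: D0) ->
    Permutation D (And a1 a2 :: D0) -> der L n.+1 G D
| d_Land n a1 a2 G0 G D :
    der L n (a1 :: a2 :: G0) D ->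
    Permutation G (And a1 a2 :: G0) -> der L n.+1 G D
| d_Ror n a1 a2 G D0 D :
    der L n G (a1 :: a2 :: D0) ->
    Permutation D (Or a1 a2 :: D0) -> der L n.+1 G D
| d_Lor n a1 a2 G0 G D :
    der L n (a1 :: G0) D -> der L n (a2 :: G0) D ->
    Permutation G (Or a1 a2 :: G0) -> der L n.+1 G D
| d_Rimp n a1 a2 G D0 D :
    der L n (a1 :: G) (a2 :: D0) ->
    Permutation D (Imp a1 a2 :: D0) -> der L n.+1 G D
| d_Limp n a1 a2 G0 G D :
    der L n G0 (a1 :: D) -> der L n (a2 :: G0) D ->
    Permutation G (Imp a1 a2 :: G0) -> der L n.+1 G D
| d_Rneg n a G D0 D :
    der L n (a :: G) D0 ->
    Permutation D (Neg a :: D0) -> der L n.+1 G D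
| d_Lneg n a G0 G D :
    der L n G0 (a :: D) ->
    Permutation G (Neg a :: G0) -> der L n.+1 G D
| d_DK n (ps : list (grp A * form A)) (Gr : grp A) (b : form A)
    (Sig Om G D : list (form A)) :
    der L n (map snd ps) [:: b] ->
    (forall q, List.In q ps -> val q.1 \subset val Gr) ->
    (forall f, List.In f Sig -> sigmaK_ok (val Gr) f) ->
    (forall f, List.In f Om -> omega_ok f) ->
    Permutation G (Sig ++ map (fun q => Box q.1 q.2) ps) ->
    Permutation D (Box Gr b :: Om) ->
    der L n.+1 G D
| d_DD n (a : A) (G0 Sig Om G D : list (form A)) :
    L = GKD ->
    der L n G0 [::] ->
    G0 <> [::] ->
    (forall f, List.In f Sig -> sigmaD_ok a f) ->
    (forall f, List.In f Om -> omega_ok f) ->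
    Permutation G (Sig ++ map (Box (sgrp a)) G0) ->
    Permutation D Om ->
    der L n.+1 G D
| d_DT n (Gr : grp A) (a : form A) (G0 G D : list (form A)) :
    L = GKT ->
    der L n (Box Gr a :: a :: G0) D ->
    Permutation G (Box Gr a :: G0) ->
    der L n.+1 G D.

(* Main.v *)
Require Import Defs.
From Stdlib Require Import List Permutation.
From mathcomp Require Import all_boot.

Ltac pt := match goal with
 | |- Permutation _ _ => first [ eassumption | apply Permutation_refl
       | eapply Permutation_trans; [apply Permutation_sym; eassumption | eassumption] ]
 end.

Lemma der_perm (A : finType) L n (G D : list (form A)) : der L n G D ->
  forall G' D', Permutation G G' -> Permutation D D' -> der L n G' D'.
Proof.
induction 1; intros G' D' HG HD.
- eapply d_init; pt.
- eapply d_bot; pt.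
- eapply d_Rand; [apply IHder1|apply IHder2|]; pt.
- eapply d_Land; [apply IHder|]; pt.
- eapply d_Ror; [apply IHder|]; pt.
- eapply d_Lor; [apply IHder1|apply IHder2|]; pt.
- eapply d_Rimp; [apply IHder|]; try pt. apply perm_skip; pt.
- eapply d_Limp; [apply IHder1|apply IHder2|]; try pt. apply perm_skip; pt.
- eapply d_Rneg; [apply IHder|]; try pt. apply perm_skip; pt.
- eapply d_Lneg; [apply IHder|]; try pt. apply perm_skip; pt.
- eapply d_DK; [apply IHder| | | | |]; eauto; pt.
- eapply d_DD; [eassumption|apply IHder| | | | |]; eauto; pt.
- eapply d_DT; [eassumption|apply IHder| ]; pt.
Qed.

Lemma der_mono (A : finType) L n (G D : list (form A)) : der L n G D ->
  forall m, n <= m -> der L m G D.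
Proof.
induction 1; intros m Hm; try (econstructor; eassumption).
all: destruct m as [|m]; [discriminate Hm|].
- eapply d_Rand; [apply IHder1|apply IHder2|]; eauto.
- eapply d_Land; [apply IHder|]; eauto.
- eapply d_Ror; [apply IHder|]; eauto.
- eapply d_Lor; [apply IHder1|apply IHder2|]; eauto.
- eapply d_Rimp; [apply IHder|]; eauto.
- eapply d_Limp; [apply IHder1|apply IHder2|]; eauto.
- eapply d_Rneg; [apply IHder|]; eauto.
- eapply d_Lneg; [apply IHder|]; eauto.
- eapply d_DK; [apply IHder| | | | |]; eauto.
- eapply d_DD; [eassumption|apply IHder| | | | |]; eauto.
- eapply d_DT; [eassumption|apply IHder| ]; eauto.
Qed.

Lemma perm_split (T : Type) (x y : T) l1 l2 : Permutation (x::l1) (y::l2) ->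
  (x = y /\ Permutation l1 l2) \/ exists l3, Permutation l1 (y::l3) /\ Permutation l2 (x::l3).
Proof.
intro H.
assert (Hy: List.In y (x::l1)) by (apply Permutation_in with (y::l2); [apply Permutation_sym; exact H| left; reflexivity]).
destruct Hy as [<-|Hy]. { left; split; auto; exact (Permutation_cons_inv H). }
right. destruct (in_split _ _ Hy) as [la [lb ->]]. exists (la++lb). split.
{ apply Permutation_sym, Permutation_middle. }
apply Permutation_cons_inv with y. eapply Permutation_trans; [apply Permutation_sym; exact H|].
eapply Permutation_trans; [apply perm_skip; apply Permutation_sym, Permutation_middle|].
apply perm_swap.
Qed.

Arguments perm_split {T x y l1 l2} _.

Lemma perm_app_cons (T : Type) (X l l' : list T) y : Permutation l (y::l') -> Permutation (X ++ l) (y :: X ++ l').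
Proof. intro H. exact (Permutation_trans (Permutation_app_head X H) (Permutation_sym (Permutation_middle X l' y))). Qed.

Arguments perm_app_cons {T} X {l l' y} _.

Lemma pswap (T : Type) (a f : T) l l3 : Permutation l (f::l3) -> Permutation (a::l) (f::a::l3).
Proof. intro H. exact (Permutation_trans (perm_skip a H) (perm_swap f a l3)). Qed.

Arguments pswap {T} a {f l l3} _.

Lemma pmid (T : Type) (X : list T) a l : Permutation (X ++ a :: l) (a :: X ++ l).
Proof. apply Permutation_sym, Permutation_middle. Qed.

Lemma pmid2 (T : Type) (X : list T) a b l : Permutation (X ++ a :: b :: l) (a :: b :: X ++ l).
Proof. eapply Permutation_trans; [apply pmid|]. apply perm_skip, pmid. Qed.

Lemma in_seqmap (T U : Type) (g : T -> U) y l : List.In y (map g l) -> exists x, y = g x.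
Proof. elim: l => [|x l IH] //= [<-|H]; [by exists x| exact: IH]. Qed.

Lemma sigK_om (A : finType) G (f : form A) : sigmaK_ok G f -> omega_ok f.
Proof. by case: f. Qed.
Lemma sigD_om (A : finType) a (f : form A) : sigmaD_ok a f -> omega_ok f.
Proof. by case: f. Qed.

Section Inv.
Variables (A : finType) (L : calculus) (f : form A) (Xl Xr : list (form A)).
Hypothesis Hf : ~ omega_ok f.

Lemma inv_R
 (HAnd : forall n b1 b2 G D0, f = And b1 b2 -> der L n G (b1::D0) -> der L n G (b2::D0) -> der L n.+1 (Xl++G) (Xr++D0))
 (HOr : forall n b1 b2 G D0, f = Or b1 b2 -> der L n G (b1::b2::D0) -> der L n.+1 (Xl++G) (Xr++D0))
 (HImp : forall n b1 b2 G D0, f = Imp b1 b2 -> der L n (b1::G) (b2::D0) -> der L n.+1 (Xl++G) (Xr++D0))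
 (HNeg : forall n b G D0, f = Neg b -> der L n (b::G) D0 -> der L n.+1 (Xl++G) (Xr++D0)) :
 forall n G D, der L n G D -> forall D1, Permutation D (f::D1) -> der L n (Xl++G) (Xr++D1).
Proof.
intros n G D Hd; induction Hd as
 [n p G0 D0 G D HG HD | n G0 G D HG
 | n b1 b2 G D0 D H1 IH1 H2 IH2 Hp | n b1 b2 G0 G D H IH Hp
 | n b1 b2 G D0 D H IH Hp | n b1 b2 G0 G D H1 IH1 H2 IH2 Hp
 | n b1 b2 G D0 D H IH Hp | n b1 b2 G0 G D H1 IH1 H2 IH2 Hp
 | n b G D0 D H IH Hp | n b G0 G D H IH Hp
 | n ps Gr b Sig Om G D H IH Hps HSig HOm HG HD
 | n a G0 Sig Om G D HL H IH Hne HSig HOm HG HD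
 | n Gr b G0 G D HL H IH Hp ]; intros D1 HD1.
- destruct (perm_split (Permutation_trans (Permutation_sym HD) HD1)) as [[e _]|[l3 [_ Hl3]]].
  + by exfalso; apply Hf; rewrite -e.
  + eapply d_init; apply perm_app_cons; eassumption.
- eapply d_bot; apply perm_app_cons; eassumption.
- destruct (perm_split (Permutation_trans (Permutation_sym Hp) HD1)) as [[e He]|[l3 [Hl3 Hl3']]].
  + eapply der_perm; [eapply HAnd; [symmetry; exact e|exact H1|exact H2]|apply Permutation_refl|].
    apply Permutation_app_head; exact He.
  + eapply d_Rand; [eapply der_perm; [exact (IH1 _ (pswap b1 Hl3))|apply Permutation_refl|apply pmid]
                   |eapply der_perm; [exact (IH2 _ (pswap b2 Hl3))|apply Permutation_refl|apply pmid]
                   |apply perm_app_cons; exact Hl3'].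
- eapply d_Land; [eapply der_perm; [exact (IH _ HD1)|apply pmid2|apply Permutation_refl]|].
  apply perm_app_cons; exact Hp.
- destruct (perm_split (Permutation_trans (Permutation_sym Hp) HD1)) as [[e He]|[l3 [Hl3 Hl3']]].
  + eapply der_perm; [eapply HOr; [symmetry; exact e|exact H]|apply Permutation_refl|].
    apply Permutation_app_head; exact He.
  + eapply d_Ror; [eapply der_perm; [exact (IH _ (pswap b1 (pswap b2 Hl3)))|apply Permutation_refl|apply pmid2]
                   |apply perm_app_cons; exact Hl3'].
- eapply d_Lor; [eapply der_perm; [exact (IH1 _ HD1)|apply pmid|apply Permutation_refl]
                |eapply der_perm; [exact (IH2 _ HD1)|apply pmid|apply Permutation_refl]|].
  apply perm_app_cons; exact Hp.
- destruct (perm_split (Permutation_trans (Permutation_sym Hp) HD1)) as [[e He]|[l3 [Hl3 Hl3']]].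
  + eapply der_perm; [eapply HImp; [symmetry; exact e|exact H]|apply Permutation_refl|].
    apply Permutation_app_head; exact He.
  + eapply d_Rimp; [eapply der_perm; [exact (IH _ (pswap b2 Hl3))|apply pmid|apply pmid]
                   |apply perm_app_cons; exact Hl3'].
- eapply d_Limp; [eapply der_perm; [exact (IH1 _ (pswap b1 HD1))|apply Permutation_refl|apply pmid]
                |eapply der_perm; [exact (IH2 _ HD1)|apply pmid|apply Permutation_refl]|].
  apply perm_app_cons; exact Hp.
- destruct (perm_split (Permutation_trans (Permutation_sym Hp) HD1)) as [[e He]|[l3 [Hl3 Hl3']]].
  + eapply der_perm; [eapply HNeg; [symmetry; exact e|exact H]|apply Permutation_refl|].
    apply Permutation_app_head; exact He.
  + eapply d_Rneg; [eapply der_perm; [exact (IH _ Hl3)|apply pmid|apply Permutation_refl]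
                   |apply perm_app_cons; exact Hl3'].
- eapply d_Lneg; [eapply der_perm; [exact (IH _ (pswap b HD1))|apply Permutation_refl|apply pmid]|].
  apply perm_app_cons; exact Hp.
- exfalso.
  destruct (perm_split (Permutation_trans (Permutation_sym HD) HD1)) as [[e _]|[l3 [Hl3 _]]].
  + by apply Hf; rewrite -e.
  + apply Hf, HOm. apply Permutation_in with (f::l3); [apply Permutation_sym; exact Hl3|left; reflexivity].
- exfalso. apply Hf, HOm. apply Permutation_in with D; [exact HD|].
  apply Permutation_in with (f::D1); [apply Permutation_sym; exact HD1|left; reflexivity].
- eapply d_DT; [exact HL|eapply der_perm; [exact (IH _ HD1)|apply pmid2|apply Permutation_refl]|].
  apply perm_app_cons; exact Hp.
Qed.

Lemma inv_L
 (HAnd : forall n b1 b2 G0 D, f = And b1 b2 -> der L n (b1::b2::G0) D -> der L n.+1 (Xl++G0) (Xr++D))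
 (HOr : forall n b1 b2 G0 D, f = Or b1 b2 -> der L n (b1::G0) D -> der L n (b2::G0) D -> der L n.+1 (Xl++G0) (Xr++D))
 (HImp : forall n b1 b2 G0 D, f = Imp b1 b2 -> der L n G0 (b1::D) -> der L n (b2::G0) D -> der L n.+1 (Xl++G0) (Xr++D))
 (HNeg : forall n b G0 D, f = Neg b -> der L n G0 (b::D) -> der L n.+1 (Xl++G0) (Xr++D)) :
 forall n G D, der L n G D -> forall G1, Permutation G (f::G1) -> der L n (Xl++G1) (Xr++D).
Proof.
intros n G D Hd; induction Hd as
 [n p G0 D0 G D HG HD | n G0 G D HG
 | n b1 b2 G D0 D H1 IH1 H2 IH2 Hp | n b1 b2 G0 G D H IH Hp
 | n b1 b2 G D0 D H IH Hp | n b1 b2 G0 G D H1 IH1 H2 IH2 Hp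
 | n b1 b2 G D0 D H IH Hp | n b1 b2 G0 G D H1 IH1 H2 IH2 Hp
 | n b G D0 D H IH Hp | n b G0 G D H IH Hp
 | n ps Gr b Sig Om G D H IH Hps HSig HOm HG HD
 | n a G0 Sig Om G D HL H IH Hne HSig HOm HG HD
 | n Gr b G0 G D HL H IH Hp ]; intros G1 HG1.
- destruct (perm_split (Permutation_trans (Permutation_sym HG) HG1)) as [[e _]|[l3 [_ Hl3]]].
  + by exfalso; apply Hf; rewrite -e.
  + eapply d_init; apply perm_app_cons; eassumption.
- destruct (perm_split (Permutation_trans (Permutation_sym HG) HG1)) as [[e _]|[l3 [_ Hl3]]].
  + by exfalso; apply Hf; rewrite -e.
  + eapply d_bot; apply perm_app_cons; eassumption.
- eapply d_Rand; [eapply der_perm; [exact (IH1 _ HG1)|apply Permutation_refl|apply pmid]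
                 |eapply der_perm; [exact (IH2 _ HG1)|apply Permutation_refl|apply pmid]|].
  apply perm_app_cons; exact Hp.
- destruct (perm_split (Permutation_trans (Permutation_sym Hp) HG1)) as [[e He]|[l3 [Hl3 Hl3']]].
  + eapply der_perm; [eapply HAnd; [symmetry; exact e|exact H]| |apply Permutation_refl].
    apply Permutation_app_head; exact He.
  + eapply d_Land; [eapply der_perm; [exact (IH _ (pswap b1 (pswap b2 Hl3)))|apply pmid2|apply Permutation_refl]
                   |apply perm_app_cons; exact Hl3'].
- eapply d_Ror; [eapply der_perm; [exact (IH _ HG1)|apply Permutation_refl|apply pmid2]|].
  apply perm_app_cons; exact Hp.
- destruct (perm_split (Permutation_trans (Permutation_sym Hp) HG1)) as [[e He]|[l3 [Hl3 Hl3']]].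
  + eapply der_perm; [eapply HOr; [symmetry; exact e|exact H1|exact H2]| |apply Permutation_refl].
    apply Permutation_app_head; exact He.
  + eapply d_Lor; [eapply der_perm; [exact (IH1 _ (pswap b1 Hl3))|apply pmid|apply Permutation_refl]
                  |eapply der_perm; [exact (IH2 _ (pswap b2 Hl3))|apply pmid|apply Permutation_refl]
                  |apply perm_app_cons; exact Hl3'].
- eapply d_Rimp; [eapply der_perm; [exact (IH _ (pswap b1 HG1))|apply pmid|apply pmid]|].
  apply perm_app_cons; exact Hp.
- destruct (perm_split (Permutation_trans (Permutation_sym Hp) HG1)) as [[e He]|[l3 [Hl3 Hl3']]].
  + eapply der_perm; [eapply HImp; [symmetry; exact e|exact H1|exact H2]| |apply Permutation_refl].
    apply Permutation_app_head; exact He.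
  + eapply d_Limp; [eapply der_perm; [exact (IH1 _ Hl3)|apply Permutation_refl|apply pmid]
                  |eapply der_perm; [exact (IH2 _ (pswap b2 Hl3))|apply pmid|apply Permutation_refl]
                  |apply perm_app_cons; exact Hl3'].
- eapply d_Rneg; [eapply der_perm; [exact (IH _ (pswap b HG1))|apply pmid|apply Permutation_refl]|].
  apply perm_app_cons; exact Hp.
- destruct (perm_split (Permutation_trans (Permutation_sym Hp) HG1)) as [[e He]|[l3 [Hl3 Hl3']]].
  + eapply der_perm; [eapply HNeg; [symmetry; exact e|exact H]| |apply Permutation_refl].
    apply Permutation_app_head; exact He.
  + eapply d_Lneg; [eapply der_perm; [exact (IH _ Hl3)|apply Permutation_refl|apply pmid]
                   |apply perm_app_cons; exact Hl3'].
- exfalso.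
  have Hin : List.In f (Sig ++ map (fun q => Box q.1 q.2) ps).
  { apply Permutation_in with G; [exact HG|].
    apply Permutation_in with (f::G1); [apply Permutation_sym; exact HG1|left; reflexivity]. }
  destruct (in_app_or _ _ _ Hin) as [Hi|Hi].
  + exact (Hf (sigK_om _ _ _ (HSig f Hi))).
  + destruct (in_seqmap _ _ _ _ _ Hi) as [x ->]. exact (Hf I).
- exfalso.
  have Hin : List.In f (Sig ++ map (Box (sgrp a)) G0).
  { apply Permutation_in with G; [exact HG|].
    apply Permutation_in with (f::G1); [apply Permutation_sym; exact HG1|left; reflexivity]. }
  destruct (in_app_or _ _ _ Hin) as [Hi|Hi].
  + exact (Hf (sigD_om _ _ _ (HSig f Hi))).
  + destruct (in_seqmap _ _ _ _ _ Hi) as [x ->]. exact (Hf I).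
- destruct (perm_split (Permutation_trans (Permutation_sym Hp) HG1)) as [[e _]|[l3 [Hl3 Hl3']]].
  + by exfalso; apply Hf; rewrite -e.
  + eapply d_DT; [exact HL|eapply der_perm; [exact (IH _ (pswap _ (pswap b Hl3)))|apply pmid2|apply Permutation_refl]|].
    apply perm_app_cons; exact Hl3'.
Qed.
End Inv.

Theorem proposition3p9 (A : finType) (hA : 0 < #|A|) (L : calculus) :
  forall (n : nat) (a1 a2 : form A) (G D : list (form A)),
  (* (R and) *)
  (der L n G (And a1 a2 :: D) -> der L n G (a1 :: D) /\ der L n G (a2 :: D)) /\
  (* (L and) *)
  (der L n (And a1 a2 :: G) D -> der L n (a1 :: a2 :: G) D) /\
  (* (R or) *)
  (der L n G (Or a1 a2 :: D) -> der L n G (a1 :: a2 :: D)) /\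
  (* (L or) *)
  (der L n (Or a1 a2 :: G) D -> der L n (a1 :: G) D /\ der L n (a2 :: G) D) /\
  (* (R imp) *)
  (der L n G (Imp a1 a2 :: D) -> der L n (a1 :: G) (a2 :: D)) /\
  (* (L imp) *)
  (der L n (Imp a1 a2 :: G) D -> der L n G (a1 :: D) /\ der L n (a2 :: G) D) /\
  (* (R neg) *)
  (der L n G (Neg a1 :: D) -> der L n (a1 :: G) D) /\
  (* (L neg) *)
  (der L n (Neg a1 :: G) D -> der L n G (a1 :: D)).
Proof.
intros n a1 a2 G D.
have Hm : forall (m : nat) (G D : list (form A)), der L m G D -> der L m.+1 G D.
{ intros m G' D' H; eapply der_mono; [exact H| exact (leqnSn m)]. }
have P := @Permutation_refl (form A).
split; [|split; [|split; [|split; [|split; [|split; [|split]]]]]].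
- intro H; split.
  + refine (@inv_R A L _ [::] [:: a1] _ _ _ _ _ _ _ _ H _ (P _)); try exact (fun x => x); intros; try discriminate.
    match goal with e : And _ _ = And _ _ |- _ => injection e as <- <- end. by apply Hm.
  + refine (@inv_R A L _ [::] [:: a2] _ _ _ _ _ _ _ _ H _ (P _)); try exact (fun x => x); intros; try discriminate.
    match goal with e : And _ _ = And _ _ |- _ => injection e as <- <- end. by apply Hm.
- intro H.
  refine (@inv_L A L _ [:: a1; a2] [::] _ _ _ _ _ _ _ _ H _ (P _)); try exact (fun x => x); intros; try discriminate.
  match goal with e : And _ _ = And _ _ |- _ => injection e as <- <- end. by apply Hm.
- intro H.
  refine (@inv_R A L _ [::] [:: a1; a2] _ _ _ _ _ _ _ _ H _ (P _)); try exact (fun x => x); intros; try discriminate.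
  match goal with e : Or _ _ = Or _ _ |- _ => injection e as <- <- end. by apply Hm.
- intro H; split.
  + refine (@inv_L A L _ [:: a1] [::] _ _ _ _ _ _ _ _ H _ (P _)); try exact (fun x => x); intros; try discriminate.
    match goal with e : Or _ _ = Or _ _ |- _ => injection e as <- <- end. by apply Hm.
  + refine (@inv_L A L _ [:: a2] [::] _ _ _ _ _ _ _ _ H _ (P _)); try exact (fun x => x); intros; try discriminate.
    match goal with e : Or _ _ = Or _ _ |- _ => injection e as <- <- end. by apply Hm.
- intro H.
  refine (@inv_R A L _ [:: a1] [:: a2] _ _ _ _ _ _ _ _ H _ (P _)); try exact (fun x => x); intros; try discriminate.
  match goal with e : Imp _ _ = Imp _ _ |- _ => injection e as <- <- end. by apply Hm.
- intro H; split.
  + refine (@inv_L A L _ [::] [:: a1] _ _ _ _ _ _ _ _ H _ (P _)); try exact (fun x => x); intros; try discriminate.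
    match goal with e : Imp _ _ = Imp _ _ |- _ => injection e as <- <- end. by apply Hm.
  + refine (@inv_L A L _ [:: a2] [::] _ _ _ _ _ _ _ _ H _ (P _)); try exact (fun x => x); intros; try discriminate.
    match goal with e : Imp _ _ = Imp _ _ |- _ => injection e as <- <- end. by apply Hm.
- intro H.
  refine (@inv_R A L _ [:: a1] [::] _ _ _ _ _ _ _ _ H _ (P _)); try exact (fun x => x); intros; try discriminate.
  match goal with e : Neg _ = Neg _ |- _ => injection e as <- end. by apply Hm.
- intro H.
  refine (@inv_L A L _ [::] [:: a1] _ _ _ _ _ _ _ _ H _ (P _)); try exact (fun x => x); intros; try discriminate.
  match goal with e : Neg _ = Neg _ |- _ => injection e as <- end. by apply Hm.
Qed.
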